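(* For every $k\in\mathbb{N}$, if $W_0=e$ and, for each $j<k$, $(W_j,U_j)\in O$ and $(U_j,W_{j+1})\in I$, then $n(W_k)=\dfrac{4(4^k-1)}{3}$.
   Context: Let $\mathbb{T}$ be the set of finite terms defined inductively by: the constant $e\in\mathbb{T}$; and if $X\in\mathbb{T}$ and $Xs$ is a finite (possibly empty) list of elements of $\mathbb{T}$, then $v(X,Xs)\in\mathbb{T}$ and $w(X,Xs)\in\mathbb{T}$. Write $[\,]$ for the empty list and $[Y|Xs]$ for the list with first element $Y$ followed by $Xs$. Define $n:\mathbb{T}\to\mathbb{N}$ by $n(e)=0$, $n(v(X,[\,]))=2^{n(X)+1}-1$, $n(v(X,[Y|Xs]))=(n(w(Y,Xs))+1)2^{n(X)+1}-1$, $n(w(X,[\,]))=2^{n(X)+2}-2$, $n(w(X,[Y|Xs]))=(n(v(Y,Xs))+2)2^{n(X)+1}-2$. Let $\sigma\subseteq\mathbb{T}\times\mathbb{T}$ be the smallest relation such that: (1) $\sigma(e,v(e,[\,]))$; (2) $\sigma(v(e,[\,]),w(e,[\,]))$; (3) if $\sigma(X,X')$ then $\sigma(v(e,[X|Xs]),w(X',Xs))$; (4) if $\sigma(P,T)$ then $\sigma(v(T,Xs),w(e,[P|Xs]))$; (5) if $\sigma(T,T')$ then $\sigma(w(T,[\,]),v(T',[\,]))$; (6) $\sigma(w(Z,[e]),v(Z,[e]))$; (7) if $\sigma(Y,Y')$ then $\sigma(w(Z,[e,Y|Ys]),v(Z,[Y'|Ys]))$; (8) if $\sigma(X',X)$ then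 $\sigma(w(Z,[X|Xs]),v(Z,[e,X'|Xs]))$. Let $O\subseteq\mathbb{T}\times\mathbb{T}$ consist of $(e,v(e,[\,]))$, $(w(X,Xs),v(e,[X|Xs]))$, and $(v(X,Xs),v(X',Xs))$ whenever $\sigma(X,X')$. Let $I\subseteq\mathbb{T}\times\mathbb{T}$ consist of $(e,w(e,[\,]))$, $(v(X,Xs),w(e,[X|Xs]))$, and $(w(X,Xs),w(X',Xs))$ whenever $\sigma(X,X')$. (These emulate the maps $x\mapsto 2x+1$ and $x\mapsto 2x+2$.) *)

(* Defs.v *)
From Stdlib Require Import Arith List.
Import ListNotations.

Inductive term : Type :=
| e : term
| v : term -> list term -> term
| w : term -> list term -> term.

(** The auxiliary [nl b a l] computes
    n(v(X,l)) when b = true and n(w(X,l)) when b = false, where a = n(X).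
    (Truncated nat subtraction is exact here since the minuends are >= 2^(a+1).) *)
Fixpoint n (t : term) : nat :=
  match t with
  | e => 0
  | v X xs =>
      (fix nl (b : bool) (a : nat) (l : list term) : nat :=
         match l with
         | [] => if b then 2 ^ (a + 1) - 1 else 2 ^ (a + 2) - 2
         | Y :: l' =>
             if b then (nl false (n Y) l' + 1) * 2 ^ (a + 1) - 1
             else (nl true (n Y) l' + 2) * 2 ^ (a + 1) - 2
         end) true (n X) xs
  | w X xs =>
      (fix nl (b : bool) (a : nat) (l : list term) : nat :=
         match l with
         | [] => if b then 2 ^ (a + 1) - 1 else 2 ^ (a + 2) - 2
         | Y :: l' =>
             if b then (nl false (n Y) l' + 1) * 2 ^ (a + 1) - 1
             else (nl true (n Y) l' + 2) * 2 ^ (a + 1) - 2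
         end) false (n X) xs
  end.

Inductive sigma : term -> term -> Prop :=
| sigma1 : sigma e (v e [])
| sigma2 : sigma (v e []) (w e [])
| sigma3 : forall X X' Xs, sigma X X' -> sigma (v e (X :: Xs)) (w X' Xs)
| sigma4 : forall P T Xs, sigma P T -> sigma (v T Xs) (w e (P :: Xs))
| sigma5 : forall T T', sigma T T' -> sigma (w T []) (v T' [])
| sigma6 : forall Z, sigma (w Z [e]) (v Z [e])
| sigma7 : forall Z Y Y' Ys, sigma Y Y' -> sigma (w Z (e :: Y :: Ys)) (v Z (Y' :: Ys))
| sigma8 : forall Z X X' Xs, sigma X' X -> sigma (w Z (X :: Xs)) (v Z (e :: X' :: Xs)).

(** O emulates x |-> 2x+1. *)
Inductive O : term -> term -> Prop :=
| O1 : O e (v e [])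
| O2 : forall X Xs, O (w X Xs) (v e (X :: Xs))
| O3 : forall X X' Xs, sigma X X' -> O (v X Xs) (v X' Xs).

(** I emulates x |-> 2x+2. *)
Inductive I : term -> term -> Prop :=
| I1 : I e (w e [])
| I2 : forall X Xs, I (v X Xs) (w e (X :: Xs))
| I3 : forall X X' Xs, sigma X X' -> I (w X Xs) (w X' Xs).

Example n_test : n (v e [e]) = 5 /\ n (w e []) = 2 /\ n (w e [e]) = 4 /\ n (v (v e []) []) = 3.
Proof. repeat split; reflexivity. Qed.

(* Main.v *)
Require Import Defs.
From Stdlib Require Import Arith List Lia.
Import ListNotations.

Fixpoint nl (b : bool) (a : nat) (l : list term) : nat :=
         match l with
         | [] => if b then 2 ^ (a + 1) - 1 else 2 ^ (a + 2) - 2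
         | Y :: l' =>
             if b then (nl false (n Y) l' + 1) * 2 ^ (a + 1) - 1
             else (nl true (n Y) l' + 2) * 2 ^ (a + 1) - 2
         end.

Lemma nv X l : n (v X l) = nl true (n X) l. Proof. reflexivity. Qed.
Lemma nw X l : n (w X l) = nl false (n X) l. Proof. reflexivity. Qed.

Lemma pow_pos a : 1 <= 2 ^ (a+1).
Proof. pose proof (Nat.pow_nonzero 2 (a+1)). lia. Qed.

Lemma LA a l : nl true a l + 1 =
  (match l with [] => 1 | Y :: l' => nl false (n Y) l' + 1 end) * 2 ^ (a+1).
Proof. pose proof (pow_pos a). destruct l; simpl; nia. Qed.

Lemma LB a l : nl false a l + 2 =
  (match l with [] => 2 | Y :: l' => nl true (n Y) l' + 2 end) * 2 ^ (a+1).
Proof. pose proof (pow_pos a). destruct l; simpl.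
  - replace (a+2) with (S (a+1)) by lia. simpl. lia.
  - nia. Qed.

Lemma p2 a : 2 ^ (S a + 1) = 2 * 2 ^ (a+1).
Proof. replace (S a + 1) with (S (a+1)) by lia. reflexivity. Qed.

Lemma VS a l : nl true (S a) l + 1 = 2 * (nl true a l + 1).
Proof. rewrite !LA, p2. lia. Qed.
Lemma WS a l : nl false (S a) l + 2 = 2 * (nl false a l + 2).
Proof. rewrite !LB, p2. lia. Qed.

Lemma sigma_succ X Y : sigma X Y -> n Y = S (n X).
Proof.
  induction 1; rewrite ?nv, ?nw in *.
  - reflexivity.
  - reflexivity.
  - simpl n. rewrite IHsigma.
    pose proof (WS (n X) Xs). pose proof (LA 0 (X :: Xs)). simpl in *. lia.
  - simpl n. rewrite IHsigma.
    pose proof (VS (n P) Xs). pose proof (LB 0 (P :: Xs)). simpl in *. lia.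
  - rewrite IHsigma. pose proof (LA (S (n T)) []) as Ha. pose proof (LB (n T) []) as Hb.
    rewrite p2 in Ha. cbv beta iota in Ha, Hb. lia.
  - pose proof (LA (n Z) [e]). pose proof (LB (n Z) [e]). change (n e) with 0 in *. cbv beta iota in *. simpl nl in H at 2. simpl nl in H0 at 2. lia.
  - pose proof (LA (n Z) (Y' :: Ys)). pose proof (LB (n Z) (e :: Y :: Ys)).
    pose proof (LA 0 (Y :: Ys)). pose proof (WS (n Y) Ys).
    cbv beta iota in H0, H1, H2. rewrite IHsigma in H0. change (n e) with 0 in H1.
    change (2 ^ (0+1)) with 2 in H2.
    assert (E1 : nl false (S (n Y)) Ys + 1 = nl true 0 (Y :: Ys) + 2) by lia.
    rewrite E1 in H0. lia.
  - pose proof (LA (n Z) (e :: X' :: Xs)). pose proof (LB (n Z) (X :: Xs)).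
    pose proof (LB 0 (X' :: Xs)). pose proof (VS (n X') Xs).
    cbv beta iota in H0, H1, H2. rewrite IHsigma in H1. change (n e) with 0 in H0.
    change (2 ^ (0+1)) with 2 in H2.
    assert (E1 : nl true (S (n X')) Xs + 2 = nl false 0 (X' :: Xs) + 1) by lia.
    rewrite E1 in H1. lia.
Qed.

Lemma O_n a b : O a b -> n b = 2 * n a + 1.
Proof.
  destruct 1.
  - reflexivity.
  - rewrite nv, nw. pose proof (LA 0 (X :: Xs)) as H. cbv beta iota in H.
    change (n e) with 0. change (2 ^ (0+1)) with 2 in H. lia.
  - rewrite !nv. apply sigma_succ in H. rewrite H. pose proof (VS (n X) Xs). lia.
Qed.

Lemma I_n a b : I a b -> n b = 2 * n a + 2.
Proof.
  destruct 1.
  - reflexivity.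
  - rewrite nv, nw. pose proof (LB 0 (X :: Xs)) as H. cbv beta iota in H.
    change (n e) with 0. change (2 ^ (0+1)) with 2 in H. lia.
  - rewrite !nw. apply sigma_succ in H. rewrite H. pose proof (WS (n X) Xs). lia.
Qed.

Theorem proposition12 :
  forall (k : nat) (W U : nat -> term),
    W 0 = e ->
    (forall j, j < k -> O (W j) (U j) /\ I (U j) (W (S j))) ->
    n (W k) = 4 * (4 ^ k - 1) / 3.
Proof.
  intros k W U H0 H.
  assert (K : forall j, j <= k -> 3 * n (W j) + 4 = 4 ^ (S j)).
  { induction j as [|j IH]; intros Hj.
    - rewrite H0. reflexivity.
    - destruct (H j ltac:(lia)) as [Ho Hi].
      apply O_n in Ho. apply I_n in Hi. specialize (IH ltac:(lia)).
      rewrite Nat.pow_succ_r'. lia. }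
  specialize (K k (le_n k)). rewrite Nat.pow_succ_r' in K.
  replace (4 * (4 ^ k - 1)) with (n (W k) * 3) by lia.
  rewrite Nat.div_mul; lia.
Qed.
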